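(* Let $(T,\mathbf{m})$ be a tree with vertex capacities. If $(T,\mathbf{m})$ admits an inversion function, then the type-selected Coxeter-like complex $\Delta_{(T,\mathbf{m})}$ is shellable.
   Context: A tree with capacities $(T,\mathbf{m})$ is a finite tree $T$ together with a nonnegative integer $\mathrm{cap}(v)$ for each vertex $v$; let $N=\sum_{v}\mathrm{cap}(v)$. The complex $\Delta_{(T,\mathbf{m})}$ (the Coxeter-like complex of $S_N/(S_{\mathrm{cap}(v_1)}\times\cdots\times S_{\mathrm{cap}(v_n)})$ with generators the transpositions corresponding to edges of $T$) has as faces the following data: a set $E^C(F)$ of edges of $T$ to delete, and an assignment to each connected component $C$ of the resulting forest of exactly $\sum_{v\in C}\mathrm{cap}(v)$ labels from $[N]$, each label assigned to exactly one component; $\dim F=|E^C(F)|-1$, and $\sigma\subseteq\tau$ iff $\sigma$ is obtained from $\tau$ by merging neighboring components (uniting their label sets). It is a simplicial complex whose facets correspond to labellings of $T$ assigning $\mathrm{cap}(v)$ labels to each vertex $v$. To a face $F$ associate the labelled tree $T(F)$ whose vertices are the components of $T$ minus $E^C(F)$ (labelled by their label sets, with capacity the sum of the capacities of their vertices) and whose edges are the edges of $E^C(F)$. An inversion function for $(T,\mathbf{m})$ is a function $I$ assigning to each face $F$ a set $I(F)$ of pairs of neighboring vertices of $T(F)$ (its inversion pairs), such that for each face $\tau$ and neighboring components $C_1,C_2$ of $T(\tau)$ there is a unique redistribution of the labels collectively assigned to $C_1,C_2$ (keeping the number of labels on each) for which the resulting $\tau'$ has $(C_1,C_2)\notin I(\tau')$;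 for $(i,j)\in I(\tau)$ write $(i,j)\tau$ for this redistributed labelling. On facets (labellings of $T$) set $(i,j)\tau\prec_{weak}\tau$ for each $(i,j)\in I(\tau)$ with $i,j$ neighbors in $T$. The following must hold: (1) each face $F$ is contained in a unique facet which is inversion-free on its restriction to each component of $F$ (i.e. has no inversion pair of vertices lying in a common component of $T$ minus $E^C(F)$); (2) the transitive closure of $\prec_{weak}$ is a partial order; (3) these properties also hold on the restriction to any subforest of $T$. A shelling of a simplicial complex is a total order $F_1,\dots,F_r$ of its facets such that for each $k>1$, $\overline{F_k}\cap\bigcup_{j<k}\overline{F_j}$ is a pure codimension-one subcomplex of $\overline{F_k}$, where $\overline{F}$ is the complex of all faces of $F$. *)

(* Defs.v *)
From mathcomp Require Import all_boot.
From Stdlib Require Import Relations.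

Set Implicit Arguments.
Unset Strict Implicit.
Unset Printing Implicit Defensive.

(* [face] selects the faces, [le] is face inclusion, [fd F] = dim F + 1 *)
(* (number of vertices of the simplex F).  Facets = maximal faces.     *)
(* The closure of a facet is the down-set of faces below it, so        *)
(*   closure(F_k) ∩ ⋃_{j<k} closure(F_j) = {G face | G<=F_k, ∃j<k G<=F_j}*)
(* and "pure of codimension one in closure(F_k)" means every maximal   *)
(* element of that subcomplex has dimension dim F_k - 1.               *)
Section Shelling.
Variables (T : finType) (face : pred T) (le : rel T) (fd : T -> nat).

Definition is_max_face (F : T) : bool :=
  face F && [forall G, (face G && le F G) ==> (G == F)].

Definition shell_inter (prev : seq T) (Fk : T) (G : T) : bool :=
  [&& face G, le G Fk & has (fun Fj => le G Fj) prev].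

Definition is_shelling (s : seq T) : Prop :=
  uniq s /\ (forall F, (F \in s) = is_max_face F) /\
  forall s1 Fk s2, s = s1 ++ Fk :: s2 -> s1 != [::] ->
    forall G, shell_inter s1 Fk G ->
      [forall H, (shell_inter s1 Fk H && le G H) ==> (H == G)] ->
      fd G + 1 = fd Fk.

Definition shellable : Prop := exists s, is_shelling s.
End Shelling.

Section Coxeter.
Variables (V : finType) (E : {set {set V}}) (cap : V -> nat).

Definition adj (D : {set {set V}}) : rel V :=
  fun x y => (x != y) && ([set x; y] \in E :\: D).

Definition is_tree : Prop :=
  (forall e, e \in E -> #|e| = 2) /\
  (forall x y : V, connect (adj set0) x y) /\
  #|E|.+1 = #|V|.

Definition comp (D : {set {set V}}) (v : V) : {set V} :=
  [set w | connect (adj D) v w].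

Definition Nlab : nat := \sum_(v : V) cap v.

(* a face: (E^C(F), map sending each label in [N] to its component) *)
Definition face_t : Type := ({set {set V}} * {ffun 'I_Nlab -> {set V}})%type.

Definition is_face (F : face_t) : bool :=
  [&& F.1 \subset E,
      [forall l, [exists v, F.2 l == comp F.1 v]] &
      [forall v, #|[set l | F.2 l == comp F.1 v]| == \sum_(w in comp F.1 v) cap w]].

(* dim F + 1 = |E^C(F)| *)
Definition fdim (F : face_t) : nat := #|F.1|.

(* S ⊆ T : S obtained from T by merging neighbouring components,
   i.e. E^C(S) ⊆ E^C(T) and each label's T-component lies in its
   S-component (label sets are united). *)
Definition face_le (S T : face_t) : bool :=
  (S.1 \subset T.1) && [forall l, T.2 l \subset S.2 l].

(* facets = labellings of T (all edges deleted) *)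
Definition is_facet (F : face_t) : bool := is_face F && (F.1 == E).

(* Inversion functions.  A pair of neighbouring vertices of T(F) is    *)
(* identified with the edge of E^C(F) joining them, so I F is a set of *)
(* edges (contained in E^C(F)).                                        *)
Variable I : face_t -> {set {set V}}.

(* tau' is obtained from tau by redistributing the labels of the two
   components joined by the edge e (same E^C, labels of all other
   components unchanged; label counts are forced by is_face). *)
Definition redistrib (tau tau' : face_t) (e : {set V}) : bool :=
  [&& is_face tau', tau'.1 == tau.1 &
      [forall l, [disjoint e & tau.2 l] ==> (tau'.2 l == tau.2 l)]].

Definition inv_pairs_ok : Prop :=
  forall tau, is_face tau -> I tau \subset tau.1.

Definition unique_redistribution : Prop :=
  forall tau e, is_face tau -> e \in tau.1 ->
    exists! tau', redistrib tau tau' e && (e \notin I tau').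

(* weak order step on facets, using only edges in A:
   weak_step A tau' tau  means  tau' = (i,j)tau  ≺_weak  tau *)
Definition weak_step (A : {set {set V}}) (tau' tau : face_t) : Prop :=
  is_facet tau /\ is_facet tau' /\
  exists2 e, e \in I tau :&: A & redistrib tau tau' e && (e \notin I tau').

(* properties (1) and (2), for the restriction to the faces satisfying
   [above], with active edge set A *)
Definition props_restr (A : {set {set V}}) (above : face_t -> bool) : Prop :=
  (forall tau, is_face tau -> above tau ->
     exists! G, [&& is_facet G, face_le tau G &
                    [disjoint I G :&: A & E :\: tau.1]]) /\
  (forall tau, above tau ->
     ~ clos_trans face_t
         (fun x y => above x /\ above y /\ weak_step A x y) tau tau).

Definition is_inversion_function : Prop :=
  [/\ inv_pairs_ok, unique_redistribution,
      props_restr E (fun _ => true) &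
      (* (3): restriction to the subforest T minus E^C(sigma), for every
         face sigma, with the label sets of its components fixed *)
      forall sigma, is_face sigma ->
        props_restr (E :\: sigma.1) (face_le sigma)].

End Coxeter.

(* Main.v *)
Require Import Defs.
From mathcomp Require Import all_boot.
From Stdlib Require Import Relations.
Set Implicit Arguments. Unset Strict Implicit. Unset Printing Implicit Defensive.

Lemma adj_sym {V : finType} (E D : {set {set V}}) : ssrbool.symmetric (adj E D).
Proof. by move=> x y; rewrite /adj eq_sym setUC. Qed.

Lemma comp_sym {V : finType} (E D : {set {set V}}) x y :
  (y \in Defs.comp E D x) = (x \in Defs.comp E D y).
Proof. by rewrite !inE (sym_connect_sym (adj_sym E D)). Qed.

Lemma comp_self {V : finType} (E D : {set {set V}}) x : x \in Defs.comp E D x.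
Proof. by rewrite inE connect0. Qed.

Lemma comp_eq {V : finType} (E D : {set {set V}}) x y :
  y \in Defs.comp E D x -> Defs.comp E D x = Defs.comp E D y.
Proof.
rewrite inE => H; apply/setP => z; rewrite !inE.
exact: (same_connect (sym_connect_sym (adj_sym E D)) H).
Qed.

Lemma comp_full {V : finType} (E : {set {set V}}) x : Defs.comp E E x = [set x].
Proof.
apply/setP => z; rewrite !inE; apply/idP/idP; last by move/eqP->; exact: connect0.
case/connectP => p; case: p => [|a p] /=; first by move=> _ ->.
by rewrite {1}/adj setDv inE andbF.
Qed.

Lemma comp_mono {V : finType} (E D D' : {set {set V}}) x y :
  D' \subset D -> y \in Defs.comp E D x -> y \in Defs.comp E D' x.
Proof.
move=> sub; rewrite !inE; apply: connect_sub => a b Hab; apply: connect1.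
move: Hab; rewrite /adj => /andP[-> ]; rewrite !inE => /andP[nD ->].
by rewrite andbT; apply: contra nD; apply: (subsetP sub).
Qed.

Lemma face_sub {V : finType} (E : {set {set V}}) cap (F : face_t cap) :
  is_face E F -> F.1 \subset E.
Proof. by case/and3P. Qed.

Lemma face_lab {V : finType} (E : {set {set V}}) cap (F : face_t cap) l :
  is_face E F -> exists v, F.2 l = Defs.comp E F.1 v.
Proof. by case/and3P => _ /forallP/(_ l)/existsP[v /eqP ->] _; exists v. Qed.

Lemma facet_lab {V : finType} (E : {set {set V}}) cap (F : face_t cap) l :
  is_facet E F -> exists v, F.2 l = [set v].
Proof.
case/andP => Hf /eqP e1; case: (face_lab l Hf) => v ->; exists v.
by rewrite e1 comp_full.
Qed.

Lemma facet_count {V : finType} (E : {set {set V}}) cap (F : face_t cap) u :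
  is_facet E F -> #|[set l | F.2 l == [set u]]| = cap u.
Proof.
case/andP => /and3P[_ _ /forallP/(_ u)/eqP] + /eqP e1.
by rewrite e1 comp_full big_set1.
Qed.

Lemma facet_eq {V : finType} (E : {set {set V}}) cap (F G : face_t cap) :
  is_facet E F -> is_facet E G -> face_le F G -> F = G.
Proof.
move=> fF fG /andP[_ /forallP H].
apply: injective_projections.
  by case/andP: fF => _ /eqP ->; case/andP: fG => _ /eqP ->.
apply/ffunP => l; have [v Hv] := facet_lab l fF; have [w Hw] := facet_lab l fG.
move: (H l); rewrite Hv Hw sub1set inE => /eqP ->; done.
Qed.

Lemma facet_max {V : finType} (E : {set {set V}}) cap (F : face_t cap) :
  is_facet E F -> is_max_face (@is_face V E cap) (@face_le V cap) F.
Proof.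
move=> fF; apply/andP; split; first by case/andP: fF.
apply/forallP => G; apply/implyP => /andP[fG le1].
have fG' : is_facet E G.
  apply/andP; split=> //; rewrite eqEsubset face_sub //=.
  by case/andP: le1 => + _; case/andP: fF => _ /eqP ->.
by apply/eqP; apply/esym; apply: facet_eq fF fG' le1.
Qed.

Lemma red_keep {V : finType} (E : {set {set V}}) cap (X X' : face_t cap) e l :
  redistrib E X X' e -> [disjoint e & X.2 l] -> X'.2 l = X.2 l.
Proof. by case/and3P => _ _ /forallP H d; apply/eqP; apply: (implyP (H l)). Qed.

Lemma redist_in_e {V : finType} (E : {set {set V}}) cap (X X' : face_t cap) e l v w :
  is_facet E X -> is_facet E X' -> redistrib E X X' e ->
  X.2 l = [set v] -> X'.2 l = [set w] -> v \in e -> w \in e.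
Proof.
move=> fX fX' red Hv Hw ve; apply/negPn/negP => we.
have sub : [set l | X.2 l == [set w]] \subset [set l | X'.2 l == [set w]].
  apply/subsetP => l'; rewrite !inE => /eqP e1.
  by rewrite (red_keep red) e1 // disjoint_sym disjoints1.
have : [set l | X.2 l == [set w]] == [set l | X'.2 l == [set w]].
  by rewrite eqEcard sub (facet_count _ fX) (facet_count _ fX') leqnn.
move/eqP/setP/(_ l); rewrite !inE Hw Hv eqxx => /eqP/set1_inj ev.
by move: ve; rewrite ev (negbTE we).
Qed.

Lemma pair_edge {V : finType} (e : {set V}) v w :
  #|e| = 2 -> v \in e -> w \in e -> v != w -> [set v; w] = e.
Proof.
move=> c2 ve we nvw; apply/eqP; rewrite eqEcard cards2 nvw c2 leqnn andbT.
by apply/subsetP => x; rewrite !inE => /orP[] /eqP ->.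
Qed.

Lemma step_above {V : finType} (E : {set {set V}}) cap (X X' tau : face_t cap) e :
  is_tree E -> is_facet E X -> is_facet E X' -> redistrib E X X' e ->
  e \in E -> e \notin tau.1 -> is_face E tau -> face_le tau X -> face_le tau X'.
Proof.
move=> [c2 [_ _]] fX fX' red eE etau ftau /andP[_ /forallP le1].
apply/andP; split.
  by case/andP: fX' => _ /eqP ->; exact: face_sub.
apply/forallP => l.
have [v Hv] := facet_lab l fX; have [w Hw] := facet_lab l fX'.
case: (boolP [disjoint e & X.2 l]) => dis /=.
  by rewrite (red_keep red dis); exact: le1.
move: dis; rewrite Hv disjoint_sym disjoints1 negbK => ve.
have we := redist_in_e fX fX' red Hv Hw ve.
have [u Hu] := face_lab l ftau.
move: (le1 l); rewrite Hv Hw Hu !sub1set => vu.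
rewrite (comp_eq vu).
case: (eqVneq v w) => [<-|nvw]; first exact: comp_self.
rewrite inE; apply: connect1; rewrite /adj nvw (pair_edge (c2 e eE) ve we nvw).
by rewrite inE etau eE.
Qed.

Definition restr {V : finType} (E : {set {set V}}) cap (F : face_t cap) (D : {set {set V}})
  : face_t cap := (D, [ffun l => \bigcup_(v in F.2 l) Defs.comp E D v]).

Lemma restr_lab {V : finType} (E : {set {set V}}) cap (F : face_t cap) (D : {set {set V}}) l v :
  F.2 l = [set v] -> (restr E F D).2 l = Defs.comp E D v.
Proof. by move=> H; rewrite /restr /= ffunE H big_set1. Qed.

Lemma comp_eqE {V : finType} (E D : {set {set V}}) a b :
  (Defs.comp E D a == Defs.comp E D b) = (a \in Defs.comp E D b).
Proof.
apply/eqP/idP => [<-|H]; first exact: comp_self.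
by rewrite (comp_eq H).
Qed.

Lemma restr_face {V : finType} (E : {set {set V}}) cap (F : face_t cap) (D : {set {set V}}) :
  is_facet E F -> D \subset E -> is_face E (restr E F D).
Proof.
move=> fF sD; apply/and3P; split => //.
  apply/forallP => l; have [v Hv] := facet_lab l fF.
  by apply/existsP; exists v; rewrite (restr_lab _ _ Hv).
apply/forallP => u /=; apply/eqP.
set C := Defs.comp E D u.
transitivity (\sum_(w in C) #|[set l | F.2 l == [set w]]|); last first.
  by apply: eq_bigr => w _; rewrite (facet_count _ fF).
rewrite -sum1_card.
under [RHS]eq_bigr => w _ do rewrite -sum1_card big_mkcond.
rewrite exchange_big big_mkcond /=; apply: eq_bigr => l _.
have [vl Hv] := facet_lab l fF.
rewrite !inE (restr_lab _ _ Hv) comp_eqE -/C.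
under eq_bigr => w _ do rewrite inE Hv.
case: (boolP (vl \in C)) => H.
  rewrite (bigD1 vl) //= eqxx big1 // => w /andP[_ nw].
  by rewrite (inj_eq set1_inj) eq_sym (negbTE nw).
rewrite big1 // => w wC; rewrite (inj_eq set1_inj); case: eqP => // ev.
by rewrite ev wC in H.
Qed.

Lemma restr_le {V : finType} (E : {set {set V}}) cap (F : face_t cap) (D : {set {set V}}) :
  is_facet E F -> D \subset E -> face_le (restr E F D) F.
Proof.
move=> fF sD; apply/andP; split; first by case/andP: fF => _ /eqP ->.
apply/forallP => l; have [v Hv] := facet_lab l fF.
by rewrite (restr_lab _ _ Hv) Hv sub1set comp_self.
Qed.

Lemma le_restr {V : finType} (E : {set {set V}}) cap (F G : face_t cap) (D : {set {set V}}) :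
  is_facet E F -> is_face E G -> face_le G F -> G.1 \subset D ->
  face_le G (restr E F D).
Proof.
move=> fF fG /andP[_ /forallP le1] sG; apply/andP; split => //.
apply/forallP => l; have [v Hv] := facet_lab l fF.
have [u Hu] := face_lab l fG.
move: (le1 l); rewrite Hv Hu sub1set (restr_lab _ _ Hv) => vu.
apply/subsetP => x xv; rewrite (comp_eq vu); exact: comp_mono sG xv.
Qed.

Definition wstep {V : finType} (E : {set {set V}}) cap (I : face_t cap -> {set {set V}})
  : rel (face_t cap) := fun x y =>
  [&& is_facet E y, is_facet E x &
      [exists e, (e \in I y :&: E) && (redistrib E y x e && (e \notin I x))]].

Definition preds {V : finType} (E : {set {set V}}) cap (I : face_t cap -> {set {set V}})
  (x : face_t cap) : {set face_t cap} :=
  [set Y | [exists Z, wstep E I Y Z && connect (wstep E I) Z x]].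

Definition rk {V : finType} (E : {set {set V}}) cap (I : face_t cap -> {set {set V}})
  (x : face_t cap) : nat := #|preds E I x|.

Lemma wstep_weak {V : finType} (E : {set {set V}}) cap (I : face_t cap -> {set {set V}}) x y :
  wstep E I x y -> weak_step E I E x y.
Proof.
case/and3P => fy fx /existsP[e /andP[eI H]]; split=> //; split=> //; by exists e.
Qed.

Lemma connect_ct {V : finType} (E : {set {set V}}) cap (I : face_t cap -> {set {set V}}) x y :
  connect (wstep E I) x y ->
  x = y \/ clos_trans _ (fun a b => is_true true /\ is_true true /\ weak_step E I E a b) x y.
Proof.
case/connectP => p; elim: p x => [|z p IH] x /=; first by move=> _ ->; left.
case/andP => st pth ey; right.
have s1 : clos_trans _ (fun a b => is_true true /\ is_true true /\ weak_step E I E a b) x z.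
  by apply: t_step; split=> //; split=> //; exact: wstep_weak.
case: (IH z pth ey) => [<-|H] //; exact: t_trans H.
Qed.

Lemma preds_lt {V : finType} (E : {set {set V}}) cap (I : face_t cap -> {set {set V}}) a b :
  (forall tau, ~ clos_trans _ (fun x y => is_true true /\ is_true true /\ weak_step E I E x y) tau tau) ->
  a \in preds E I b -> rk E I a < rk E I b.
Proof.
move=> Hac ab; apply: proper_card; apply/properP; split.
  apply/subsetP => Y; rewrite !inE => /existsP[Z /andP[sYZ cZa]].
  move: ab; rewrite inE => /existsP[Z' /andP[saZ' cZ'b]].
  apply/existsP; exists Z; rewrite sYZ /=.
  by apply: connect_trans cZa (connect_trans (connect1 saZ') cZ'b).
exists a => //; rewrite inE; apply/negP => /existsP[Z /andP[saZ cZa]].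
apply: (Hac a).
have s1 : clos_trans _ (fun a b => is_true true /\ is_true true /\ weak_step E I E a b) a Z.
  by apply: t_step; split=> //; split=> //; exact: wstep_weak.
case: (connect_ct cZa) => [eZ|H]; [by subst | exact: t_trans H].
Qed.

Lemma connect_preds {V : finType} (E : {set {set V}}) cap (I : face_t cap -> {set {set V}}) a b :
  connect (wstep E I) a b -> a != b -> a \in preds E I b.
Proof.
case/connectP => p; case: p => [|z p] /=; first by move=> _ ->; rewrite eqxx.
case/andP => st pth eb _; rewrite inE; apply/existsP; exists z; rewrite st /=.
by apply/connectP; exists p.
Qed.

Lemma step_preds {V : finType} (E : {set {set V}}) cap (I : face_t cap -> {set {set V}}) a b :
  wstep E I a b -> a \in preds E I b.
Proof. by move=> st; rewrite inE; apply/existsP; exists b; rewrite st connect0. Qed.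

Lemma sorted_before {T : eqType} (leT : rel T) (s s1 s2 : seq T) (x y : T) :
  ssrbool.transitive leT -> sorted leT s -> s = s1 ++ y :: s2 -> x \in s1 -> leT x y.
Proof.
move=> tr so es xs1; rewrite es in so.
have : subseq [:: x; y] (s1 ++ y :: s2).
  by rewrite -[[:: x; y]]/([:: x] ++ [:: y]); apply: cat_subseq;
     [rewrite sub1seq | rewrite /= eqxx sub0seq].
by move/(subseq_sorted tr)/(_ so) => /= /andP[].
Qed.

Lemma sorted_after {T : eqType} (leT : rel T) (s s1 s2 : seq T) (x y : T) :
  ssrbool.transitive leT -> sorted leT s -> s = s1 ++ y :: s2 -> x \in s2 -> leT y x.
Proof.
move=> tr so es xs2; rewrite es in so.
have : subseq [:: y; x] (s1 ++ y :: s2).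
  by rewrite -[[:: y; x]]/([::] ++ [:: y; x]); apply: cat_subseq;
     [rewrite sub0seq | rewrite /= eqxx sub1seq].
by move/(subseq_sorted tr)/(_ so) => /= /andP[].
Qed.

Lemma red_facet {V : finType} (E : {set {set V}}) cap (X X' : face_t cap) e :
  redistrib E X X' e -> is_facet E X -> is_facet E X'.
Proof.
case/and3P => f /eqP e1 _ /andP[_ /eqP e2]; apply/andP; split => //.
apply/eqP; exact: (etrans e1 e2).
Qed.

Lemma descent {V : finType} (E : {set {set V}}) cap (I : face_t cap -> {set {set V}}) (tau : face_t cap) :
  is_tree E -> unique_redistribution E I ->
  (forall t, ~ clos_trans _ (fun x y => is_true true /\ is_true true /\ weak_step E I E x y) t t) ->
  is_face E tau ->
  forall n X, rk E I X <= n -> is_facet E X -> face_le tau X ->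
  exists Y, [&& is_facet E Y, face_le tau Y & [disjoint I Y :&: E & E :\: tau.1]]
            /\ connect (wstep E I) Y X.
Proof.
move=> tree Hur Hac ftau; elim=> [|n IH] X rX fX leX.
all: case: (boolP [disjoint I X :&: E & E :\: tau.1]) => dis;
  first by exists X; rewrite fX leX dis connect0.
all: move: dis; rewrite -setI_eq0 => /set0Pn[e]; rewrite !inE => /andP[/andP[eI eE] /andP[etau _]].
all: have eX : e \in X.1 by case/andP: fX => _ /eqP ->.
all: case: (Hur X e (proj1 (andP fX)) eX) => X' [/andP[red eI'] _].
all: have fX' : is_facet E X' by exact: red_facet red fX.
all: have st : wstep E I X' X by
  rewrite /wstep fX fX' /=; apply/existsP; exists e; rewrite inE eI eE red eI'.
all: have lt := preds_lt Hac (step_preds st).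
- by move: (leq_trans lt rX).
have [Y [HY cY]] := IH X' (leq_trans lt rX) fX'
   (step_above tree fX fX' red eE etau ftau leX).
by exists Y; split => //; exact: connect_trans cY (connect1 st).
Qed.

Theorem mainTheorem3 (V : finType) (E : {set {set V}}) (cap : V -> nat)
    (I : @face_t V cap -> {set {set V}}) :
  is_tree E -> @is_inversion_function V E cap I ->
  shellable (@is_face V E cap) (@face_le V cap) (@fdim V cap).
Proof.
move=> tree [Hinv Hur [Hex Hac] _].
have Hac' : forall t, ~ clos_trans _ (fun x y => is_true true /\ is_true true /\ weak_step E I E x y) t t
  := fun t => Hac t isT.
pose leR := fun a b => rk E I a <= rk E I b.
have tr : ssrbool.transitive leR by move=> y x z; exact: leq_trans.
have tot : total leR by move=> a b; exact: leq_total.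
pose s := sort leR (enum [pred F | is_facet E F]).
have so : sorted leR s := sort_sorted tot _.
have memS : forall F, (F \in s) = is_facet E F by move=> F; rewrite mem_sort mem_enum.
have us : uniq s by rewrite sort_uniq enum_uniq.
exists s; split => //; split.
  move=> F; rewrite memS; apply/idP/idP; first exact: facet_max.
  case/andP => fF /forallP mx.
  have [G [/and3P[fG leG _] _]] := Hex F fF isT.
  have := mx G; rewrite leG (proj1 (andP fG)) /= => /eqP <-; exact: fG.
move=> s1 Fk s2 es ne G shG maxG.
have fFk : is_facet E Fk by rewrite -memS es mem_cat inE eqxx orbT.
case/and3P: (shG) => fG leGk /hasP[Fj Fjs1 leGj].
have fFj : is_facet E Fj by rewrite -memS es mem_cat Fjs1.
have Fkn : Fk \notin s1.
  by move: us; rewrite es cat_uniq => /and3P[_ /= + _]; rewrite negb_or => /andP[].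
case: (boolP [disjoint I Fk :&: E & E :\: G.1]) => dis.
  have [Y [/and3P[fY leY disY] cY]] :=
    descent tree Hur Hac' fG (leqnn _) fFj leGj.
  have [G0 [_ uG0]] := Hex G fG isT.
  have eY : Y = Fk.
    by rewrite -(uG0 Y) ?fY ?leY ?disY // -(uG0 Fk) // fFk leGk dis.
  rewrite eY in cY.
  have nkj : Fk != Fj by apply: contraNneq Fkn => ->.
  have := preds_lt Hac' (connect_preds cY nkj).
  by rewrite ltnNge (sorted_before tr so es Fjs1 : rk E I Fj <= rk E I Fk).
move: dis; rewrite -setI_eq0 => /set0Pn[e]; rewrite !inE => /andP[/andP[eI eE] /andP[eG _]].
have eX : e \in Fk.1 by case/andP: fFk => _ /eqP ->.
case: (Hur Fk e (proj1 (andP fFk)) eX) => X' [/andP[red eI'] _].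
have fX' : is_facet E X' by exact: red_facet red fFk.
have st : wstep E I X' Fk by
  rewrite /wstep fFk fX' /=; apply/existsP; exists e; rewrite inE eI eE red eI'.
have lt := preds_lt Hac' (step_preds st).
have X's1 : X' \in s1.
  have : X' \in s by rewrite memS.
  rewrite es mem_cat inE => /orP[//|/orP[/eqP eX'|X's2]].
    by rewrite eX' ltnn in lt.
  by move: (sorted_after tr so es X's2); rewrite /leR leqNgt lt.
have sD : E :\ e \subset E by apply: subsetDl.
set H := restr E Fk (E :\ e).
have fH := restr_face fFk sD.
have leHk := restr_le fFk sD.
have eH : e \notin H.1 by rewrite /H /= setD11.
have leHX' := step_above tree fFk fX' red eE eH fH leHk.
have sG : G.1 \subset E :\ e.
  apply/subsetP => x xG; rewrite !inE (subsetP (face_sub fG)) // andbT.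
  by apply: contraNneq eG => <-.
have leGH := le_restr fFk fG leGk sG.
have shH : shell_inter (@is_face V E cap) (@face_le V cap) s1 Fk H.
  by rewrite /shell_inter fH leHk /=; apply/hasP; exists X'.
move: (forallP maxG H); rewrite shH leGH /= => /eqP eHG.
rewrite /fdim -eHG /H /=; case/andP: fFk => _ /eqP ->.
by rewrite [in RHS](cardsD1 e) eE addnC.
Qed.
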